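(* Let $p_m$ denote the $m$-th prime number ($p_1=2$, $p_2=3$, $p_3=5,\ldots$), and define the sequence $(q_k)_{k\geq 1}$ of positive integers by $q_1=1$ and $q_k=2p_{q_{k-1}}$ for $k>1$. Then $p_{q_{k_1}}\cdot p_{q_{k_2}}\leq q_{k_1+k_2}$ for all pairs $(k_1,k_2)$ of positive integers. *)

(* Defs.v *)
From mathcomp Require Import all_boot.
Set Implicit Arguments. Unset Strict Implicit. Unset Printing Implicit Defensive.

Lemma next_prime_ex (n : nat) : exists p, (n < p) && prime p.
Proof. by case: (prime_above n) => p Hnp Hp; exists p; rewrite Hnp Hp. Qed.

Definition next_prime (n : nat) : nat := ex_minn (next_prime_ex n).

(* nth_prime m = p_m, 1-indexed: p_1 = 2, p_2 = 3, p_3 = 5, ...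
   (nth_prime 0 = 1 is a junk value, never used). *)
Fixpoint nth_prime (m : nat) : nat :=
  match m with
  | 0 => 1
  | m'.+1 => next_prime (nth_prime m')
  end.

(* q_1 = 1, q_k = 2 * p_{q_{k-1}} for k > 1 (q 0 := 1 is junk, unused). *)
Fixpoint q (k : nat) : nat :=
  match k with
  | 0 => 1
  | 1 => 1
  | k'.+1 => 2 * nth_prime (q k')
  end.

(* Main.v *)
Require Import Defs.
From mathcomp Require Import all_boot zify.
Set Implicit Arguments. Unset Strict Implicit. Unset Printing Implicit Defensive.

Lemma next_primeP n :
  [/\ n < next_prime n, prime (next_prime n) &
      forall k, n < k -> prime k -> next_prime n <= k].
Proof.
rewrite /next_prime; case: ex_minnP => m /andP[H1 H2] Hmin; split=> // k Hk Pk.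
by apply: Hmin; rewrite Hk Pk.
Qed.

Lemma next_prime_eq n p : n < p -> prime p ->
  (forall k, n < k < p -> ~~ prime k) -> next_prime n = p.
Proof.
move=> Hnp Pp Hno; case: (next_primeP n) => H1 H2 H3.
apply/eqP; rewrite eqn_leq H3 //=; rewrite leqNgt; apply/negP => Hlt.
by move: (Hno (next_prime n)); rewrite H1 Hlt H2 => /(_ isT).
Qed.

Lemma nth_prime_S m : nth_prime m.+1 = next_prime (nth_prime m).
Proof. by []. Qed.

Lemma nth_prime_lt m : nth_prime m < nth_prime m.+1.
Proof. by case: (next_primeP (nth_prime m)). Qed.

Lemma nth_prime_prime m : 0 < m -> prime (nth_prime m).
Proof. by case: m => // m _; case: (next_primeP (nth_prime m)). Qed.

Lemma nth_prime_mono m1 m2 : m1 <= m2 -> nth_prime m1 <= nth_prime m2.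
Proof.
move=> /subnK <-; elim: (m2 - m1) => // d IH.
by rewrite addSn; apply: leq_trans IH (ltnW (nth_prime_lt _)).
Qed.

Lemma nth_prime_ge m : m < nth_prime m.
Proof. elim: m => // m IH; exact: leq_ltn_trans IH (nth_prime_lt m). Qed.

Definition pic (x : nat) := \sum_(0 <= p < x.+1) prime p.

Lemma pic_S x : pic x.+1 = pic x + prime x.+1.
Proof. by rewrite /pic big_nat_recr. Qed.

Lemma pic_gap m : pic (nth_prime m) = m ->
  forall d, nth_prime m + d < nth_prime m.+1 -> pic (nth_prime m + d) = m.
Proof.
move=> H; elim=> [|d IH]; first by rewrite addn0.
move=> Hd; rewrite addnS pic_S IH; last by apply: ltnW; rewrite -addnS.
case: (next_primeP (nth_prime m)) => _ _ Hmin.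
case Pk: (prime _); last by rewrite addn0.
have Hk : nth_prime m < nth_prime m + d.+1 by rewrite -addn1 leq_add2l.
move: (Hmin _ Hk); rewrite addnS Pk => /(_ isT).
by rewrite -nth_prime_S leqNgt -addnS Hd.
Qed.

Lemma pic_nth m : pic (nth_prime m) = m.
Proof.
elim: m => [|m IH]; first by rewrite /pic unlock.
have Hlt := nth_prime_lt m.
have := pic_gap IH (d := (nth_prime m.+1).-1 - nth_prime m).
rewrite subnKC; last by rewrite -ltnS prednK // (leq_ltn_trans _ Hlt).
rewrite prednK ?(leq_ltn_trans _ Hlt) // => /(_ (leqnn _)) H.
have := pic_S (nth_prime m.+1).-1; rewrite prednK ?(leq_ltn_trans _ Hlt) // H.
by rewrite nth_prime_prime // addn1.
Qed.

Lemma pic_pred_nth m : 0 < m -> pic (nth_prime m).-1 = m.-1.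
Proof.
case: m => // m _.
have Hlt := nth_prime_lt m.
have Hp : 0 < nth_prime m.+1 by exact: leq_ltn_trans _ Hlt.
have := pic_S (nth_prime m.+1).-1; rewrite prednK // pic_nth nth_prime_prime //.
by rewrite addn1 => /eqP; rewrite eqSS => /eqP.
Qed.

Lemma bin_step m k : k < m -> 'C(m.*2, k) <= 'C(m.*2, k.+1).
Proof.
move=> Hk; have H := mul_bin_left m.*2 k.
rewrite -(@leq_pmul2l k.+1) // H leq_mul2r; apply/orP; right; lia.
Qed.

Lemma bin_le_mid m k : 'C(m.*2, k) <= 'C(m.*2, m).
Proof.
have Hlow : forall d, d <= m -> 'C(m.*2, m - d) <= 'C(m.*2, m).
  elim=> [|d IH] Hd; first by rewrite subn0.
  apply: leq_trans (IH (ltnW Hd)).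
  have -> : m - d = (m - d.+1).+1 by lia.
  apply: bin_step; lia.
case: (leqP k m) => Hk.
  by have := Hlow (m - k) (leq_subr _ _); rewrite subKn.
case: (leqP k m.*2) => Hk2; last by rewrite bin_small.
rewrite -bin_sub //; have -> : m.*2 - k = m - (k - m) by lia.
apply: Hlow; lia.
Qed.

Lemma central_bin m : 4 ^ m <= m.*2.+1 * 'C(m.*2, m).
Proof.
have -> : 4 ^ m = (1 + 1) ^ m.*2 by rewrite -muln2 mulnC expnM.
rewrite expnDn.
apply: (@leq_trans (\sum_(i < m.*2.+1) 'C(m.*2, m))).
  apply: leq_sum => i _; rewrite !exp1n !muln1; exact: bin_le_mid.
by rewrite sum_nat_const card_ord.
Qed.

Lemma sum_le_t N t : \sum_(1 <= k < N) (k <= t) <= t.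
Proof.
suff : \sum_(1 <= k < N) (k <= t) <= minn N.-1 t by move/leq_trans; apply; exact: geq_minr.
elim: N => [|N IH]; first by rewrite big_geq.
case: N IH => [|N] IH; first by rewrite big_geq.
rewrite big_nat_recr //=.
case: (leqP N.+1 t) => H; lia.
Qed.

Lemma div2_le m d : 0 < d -> m.*2 %/ d <= (m %/ d).*2.+1.
Proof.
move=> d0; rewrite -ltnS ltn_divLR //.
have := ltn_ceil m d0; lia.
Qed.

Lemma logn_cbin p m : prime p -> 0 < m ->
  logn p 'C(m.*2, m) <= trunc_log p m.*2.
Proof.
move=> Pp m0; set t := trunc_log p m.*2.
have p1 := prime_gt1 Pp.
have Cpos : 0 < 'C(m.*2, m) by rewrite bin_gt0 -addnn leq_addr.
have F := bin_fact (leq_addr m m : m <= m + m).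
rewrite addnn in F; have E2 : m.*2 - m = m by lia. rewrite E2 in F.
have Ef : logn p m.*2`! = logn p 'C(m.*2, m) + (logn p m`! + logn p m`!).
  by rewrite -F !lognM // ?muln_gt0 fact_gt0.
rewrite !logn_fact // in Ef.
have Ext : \sum_(1 <= k < m.+1) m %/ p ^ k = \sum_(1 <= k < m.*2.+1) m %/ p ^ k.
  rewrite [RHS](big_cat_nat _ (n := m.+1)) //=; last by lia.
  rewrite [X in _ = _ + X]big1_seq ?addn0 // => k /andP[_]; rewrite mem_iota => /andP[Hk _].
  apply: divn_small; apply: leq_trans Hk _; apply: ltnW; exact: ltn_expl.
rewrite Ext in Ef.
have Hle : \sum_(1 <= k < m.*2.+1) m.*2 %/ p ^ k <=
   \sum_(1 <= k < m.*2.+1) ((m %/ p ^ k).*2 + (k <= t)).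
  apply: leq_sum => k _; case: (leqP k t) => Hkt.
    by rewrite addn1; apply: div2_le; rewrite expn_gt0 ltnW.
  rewrite divn_small ?addn0 //; apply: leq_trans (trunc_log_ltn m.*2 p1) _.
  by rewrite leq_exp2l.
rewrite big_split /= in Hle.
have := sum_le_t (m.*2.+1) t.
have : \sum_(1 <= i < m.*2.+1) (m %/ p ^ i).*2 = (\sum_(1 <= k < m.*2.+1) m %/ p ^ k).*2.
  under eq_bigr => i _ do rewrite -muln2. by rewrite -big_distrl /= muln2.
lia.
Qed.

Lemma cbin_pic m : 0 < m -> 'C(m.*2, m) <= m.*2 ^ pic m.*2.
Proof.
move=> m0; set C := 'C(m.*2, m).
have Cpos : 0 < C by rewrite bin_gt0 -addnn leq_addr.
have C2m : m.*2 <= C.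
  by have := bin_le_mid m 1; rewrite bin1.
rewrite -{1}(partnT Cpos) /partn.
rewrite (eq_bigl predT) //.
apply: (@leq_trans (\prod_(0 <= p < C.+1) m.*2 ^ (prime p && (p <= m.*2)))).
  apply: leq_prod => p _.
  case Pp: (prime p) => /=; last first.
    by rewrite lognE Pp.
  have p1 := prime_gt1 Pp.
  have Hl := logn_cbin Pp m0.
  case: (leqP p m.*2) => Hp.
    rewrite expn1; apply: leq_trans (trunc_logP p1 _); last by rewrite double_gt0.
    by rewrite leq_exp2l.
  rewrite expn0; have : trunc_log p m.*2 = 0.
    apply/eqP; rewrite trunc_log_eq0; apply/orP; right.
    by rewrite -ltnS prednK // ltnW.
  by move=> E; rewrite E leqn0 in Hl; rewrite (eqP Hl).
rewrite -expn_sum; apply: leq_pexp2l; first by rewrite double_gt0.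
rewrite /pic [X in X <= _](big_cat_nat _ (n := m.*2.+1)) //=.
rewrite [X in _ + X <= _]big1_seq ?addn0.
  by apply: leq_sum => p _; case: (prime p) => //=; exact: leq_b1.
move=> p /andP[_]; rewrite mem_iota => /andP[H _]; rewrite leqNgt.
have -> : m.*2 < p by lia.
by rewrite andbF.
Qed.

Lemma nth_prime1 : nth_prime 1 = 2.
Proof.
apply: next_prime_eq => // k; case: k => [|[|]] //.
Qed.

Lemma CU n : 1 < n -> 2 ^ (nth_prime n).-1 <= nth_prime n ^ n.
Proof.
move=> n1; set x := nth_prime n.
have Px : prime x by apply: nth_prime_prime; lia.
have x2 : 2 < x.
  have := nth_prime_mono n1; rewrite -/x.
  have := nth_prime_lt 1; rewrite nth_prime1 => H1 H2; exact: leq_trans H1 H2.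
have ox : odd x.
  by case: (even_prime Px) => // E; rewrite E in x2.
set m := x./2.
have xm : x = m.*2.+1 by rewrite /m -{1}(odd_double_half x) ox.
have m0 : 0 < m by lia.
have Hp : pic m.*2 = n.-1.
  have := pic_pred_nth (ltnW n1); rewrite -/x xm.
  by [].
have := central_bin m; rewrite -xm.
have := cbin_pic m0; rewrite Hp => H1 H2.
have E : 2 ^ x.-1 = 4 ^ m by rewrite xm /= -muln2 mulnC expnM.
rewrite E; apply: (leq_trans H2).
have En : x ^ n = x * x ^ n.-1 by rewrite -expnS prednK // ltnW.
rewrite En leq_mul2l; apply/orP; right; apply: leq_trans H1 _.
rewrite leq_exp2r; lia.
Qed.

Lemma UB0 n : 1 < n -> nth_prime n <= (trunc_log 2 (nth_prime n)).+1 * n.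
Proof.
move=> n1; set x := nth_prime n; set e := trunc_log 2 x.
have H1 := CU n1; rewrite -/x in H1.
have H2 : x < 2 ^ e.+1 := trunc_log_ltn x (isT : 1 < 2).
have H3 : x ^ n < 2 ^ (e.+1 * n).
  by rewrite expnM ltn_exp2r //; lia.
have := leq_ltn_trans H1 H3; rewrite ltn_exp2l // mulnC; lia.
Qed.

Lemma pow_big e d U : (e + 2) * U < 2 ^ e.+1 -> (e + d + 2) * U < 2 ^ (e + d).+1.
Proof.
move=> H; elim: d => [|d IH]; first by rewrite addn0.
have E : 2 ^ (e + d.+1).+1 = 2 * 2 ^ (e + d).+1 by rewrite addnS expnS.
rewrite E; apply: (@leq_ltn_trans (2 * ((e + d + 2) * U))).
  rewrite mulnA leq_mul2r; apply/orP; right; lia.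
by rewrite ltn_mul2l.
Qed.

Lemma UB1 n U e : 1 < n -> n <= U -> (e + 2) * U < 2 ^ e.+1 ->
  nth_prime n <= e.+1 * U.
Proof.
move=> n1 nU H; set x := nth_prime n; set e' := trunc_log 2 x.
have H1 := UB0 n1; rewrite -/x -/e' in H1.
have xpos : 0 < x by apply: leq_ltn_trans (nth_prime_ge n); lia.
have H2 : 2 ^ e' <= x := trunc_logP (isT : 1 < 2) xpos.
case: (leqP e' e) => He.
  apply: leq_trans H1 _; apply: leq_mul; lia.
have := pow_big (e' - e.+1) H; have -> : e + (e' - e.+1) = e'.-1 by lia.
have -> : e'.-1.+1 = e' by lia.
have -> : e'.-1 + 2 = e'.+1 by lia.
move=> H4; have H5 : x <= e'.+1 * U by apply: leq_trans H1 _; rewrite leq_mul2l nU orbT.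
by have := leq_ltn_trans (leq_trans H2 H5) H4; rewrite ltnn.
Qed.

Definition prim x := \prod_(0 <= p < x.+1 | prime p) p.

Lemma prod_primes_dvd a b n :
  (forall p, a <= p < b -> prime p -> p %| n) ->
  \prod_(a <= p < b | prime p) p %| n.
Proof.
elim: b => [|b IH] H; first by rewrite big_geq.
case: (leqP a b) => Hab; last by rewrite big_geq.
have IH' : \prod_(a <= p < b | prime p) p %| n.
  by apply: IH => p /andP[H1 H2]; apply: H; rewrite H1 ltnW.
rewrite big_mkcond big_nat_recr //= -big_mkcond.
case Pb: (prime b); last by rewrite muln1.
rewrite Gauss_dvd ?IH' ?H ?Hab //=.
rewrite coprime_sym prime_coprime //; apply/negP.
rewrite Euclid_dvd_prod // big1_seq // => i /andP[Pi]; rewrite mem_index_iota => /andP[_ Hi].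
by rewrite dvdn_prime2 //; apply/negP => /eqP E; rewrite E ltnn in Hi.
Qed.

Lemma prime_ndvd_fact p k : prime p -> k < p -> ~~ (p %| k`!).
Proof.
move=> Pp Hk; rewrite fact_prod Euclid_dvd_prod // big1_seq // => i /andP[_].
rewrite mem_index_iota => /andP[H1 H2]; apply/negP => Hd.
have := dvdn_leq H1 Hd; lia.
Qed.

Lemma bin_odd_le m : 'C(m.*2.+1, m) <= 4 ^ m.
Proof.
have E : 2 ^ m.*2.+1 = \sum_(0 <= i < m.*2.+2) 'C(m.*2.+1, i).
  rewrite -[2]/(1 + 1) expnDn big_mkord; apply: eq_bigr => i _.
  by rewrite !exp1n !muln1.
have Hs : 'C(m.*2.+1, m) + 'C(m.*2.+1, m.+1) <= 2 ^ m.*2.+1.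
  rewrite E (big_cat_nat _ (n := m)) //=; last by lia.
  rewrite big_nat_recl; last by lia.
  rewrite big_nat_recl; last by lia.
  lia.
have Hsym : 'C(m.*2.+1, m.+1) = 'C(m.*2.+1, m).
  rewrite [in LHS](_ : m.+1 = m.*2.+1 - m); last by lia.
  by rewrite bin_sub //; lia.
rewrite Hsym in Hs.
have E4 : 4 ^ m = 2 ^ m.*2 by rewrite -muln2 mulnC expnM.
have : 2 ^ m.*2.+1 = 2 * 2 ^ m.*2 by rewrite expnS.
lia.
Qed.

Lemma prim_S x : prim x.+1 = prim x * (if prime x.+1 then x.+1 else 1).
Proof. by rewrite /prim big_mkcond big_nat_recr //= -big_mkcond. Qed.

Lemma prim_le x : prim x <= 4 ^ x.
Proof.
elim/ltn_ind: x => x IH.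
case: x IH => [|x] IH; first by rewrite /prim unlock.
case: x IH => [|x] IH; first by rewrite /prim unlock.
case: x IH => [|x] IH; first by rewrite /prim unlock.
case Ox: (odd x.+3); last first.
  have NP : prime x.+3 = false.
    apply/negP => P2; case: (even_prime P2) => [E|]; last by rewrite Ox.
    by [].
  rewrite prim_S NP muln1; apply: leq_trans (IH _ (ltnSn _)) _.
  by rewrite leq_exp2l.
set m := x.+3./2.
have xm : x.+3 = m.*2.+1 by rewrite /m -{1}(odd_double_half x.+3) Ox.
have m1 : 0 < m by lia.
rewrite xm /prim (big_cat_nat _ (n := m.+2)) //=; last by lia.
have H1 : \prod_(0 <= p < m.+2 | prime p) p <= 4 ^ m.+1.
  by apply: (IH m.+1); lia.
have H2 : \prod_(m.+2 <= p < m.*2.+2 | prime p) p <= 'C(m.*2.+1, m).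
  apply: dvdn_leq; first by rewrite bin_gt0; lia.
  apply: prod_primes_dvd => p /andP[Hp1 Hp2] Pp.
  have Hmm : m <= m.*2.+1 by lia.
  have F := bin_fact Hmm.
  have E2 : m.*2.+1 - m = m.+1 by lia.
  rewrite E2 in F.
  have : p %| m.*2.+1`! by rewrite dvdn_fact //; lia.
  rewrite -F Euclid_dvdM // Euclid_dvdM //.
  rewrite (negbTE (prime_ndvd_fact Pp _)) ?(negbTE (prime_ndvd_fact Pp _)) ?orbF //; lia.
have H3 := bin_odd_le m.
have E : 4 ^ m.*2.+1 = 4 ^ m.+1 * 4 ^ m by rewrite -expnD; congr (_ ^ _); lia.
rewrite E; apply: leq_mul => //; exact: leq_trans H2 H3.
Qed.

Lemma prim_mono x y : x <= y -> prim x <= prim y.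
Proof.
move=> /subnK <-; elim: (y - x) => // d IH; rewrite addSn prim_S.
apply: leq_trans IH _; rewrite leq_pmulr //; case: (prime _) => //.
Qed.

Lemma fact_le_prim N : N`! <= prim (nth_prime N).
Proof.
elim: N => [|N IH]; first by rewrite /prim unlock.
set y := nth_prime N.+1.
have Py : prime y := nth_prime_prime (ltn0Sn N).
have y0 : 0 < y by exact: prime_gt0.
have E : prim y = prim y.-1 * y.
  by rewrite -{1}(prednK y0) prim_S prednK // Py.
rewrite factS E mulnC; apply: leq_mul.
  apply: leq_trans IH _; apply: prim_mono.
  by have := nth_prime_lt N; rewrite -/y; lia.
exact: ltnW (nth_prime_ge _).
Qed.

Lemma pow2_fact k : 2 ^ k.-1 <= k`!.
Proof.
elim: k => // k IH; rewrite factS /=.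
case: k IH => // k IH; rewrite expnS /=.
by apply: leq_mul.
Qed.

Lemma ffact_le N k : N ^_ k <= N ^ k.
Proof.
rewrite ffact_prod; apply: leq_trans (_ : \prod_(i < k) N <= _).
  by apply: leq_prod => i _; exact: leq_subr.
by rewrite prod_nat_const card_ord.
Qed.

Lemma term_bound N k : 0 < k <= N -> 2 ^ k.-1 * ('C(N, k) * N ^ (N - k)) <= N ^ N.
Proof.
move=> /andP[k0 kN].
have H1 : 2 ^ k.-1 * 'C(N, k) <= N ^ k.
  apply: leq_trans (ffact_le N k); rewrite -bin_ffact mulnC leq_mul2l.
  by rewrite pow2_fact orbT.
rewrite mulnA; apply: leq_trans (leq_mul H1 (leqnn _)) _.
by rewrite -expnD subnKC.
Qed.

Lemma partial_sum N i : i <= N ->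
  2 ^ i * \sum_(0 <= k < i.+1) 'C(N, k) * N ^ (N - k) <= (3 * 2 ^ i - 2) * N ^ N.
Proof.
elim: i => [|i IH] Hi.
  by rewrite big_nat1 bin0 subn0 mul1n expn0 mul1n.
rewrite big_nat_recr //=.
have H1 := IH (ltnW Hi).
have H2 := term_bound (_ : 0 < i.+1 <= N); rewrite /= in H2.
have H2' := H2 Hi.
set S := \sum_(0 <= k < i.+1) _ in H1 *.
set T := 'C(N, i.+1) * N ^ (N - i.+1) in H2' *.
rewrite expnS.
have P1 : 1 <= 2 ^ i by rewrite expn_gt0.
nia.
Qed.

Lemma succ_pow N : N.+1 ^ N <= 3 * N ^ N.
Proof.
have E : N.+1 ^ N = \sum_(0 <= k < N.+1) 'C(N, k) * N ^ (N - k).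
  rewrite [in LHS](_ : N.+1 = N + 1); last by rewrite addn1.
  rewrite expnDn big_mkord; apply: eq_bigr => i _; by rewrite exp1n muln1.
have H := partial_sum (leqnn N); rewrite -E in H.
have P1 : 1 <= 2 ^ N by rewrite expn_gt0.
nia.
Qed.

Lemma fact_pow N : N ^ N <= 3 ^ N * N`!.
Proof.
elim: N => // N IH.
rewrite expnS factS.
apply: leq_trans (_ : N.+1 * (3 * N ^ N) <= _).
  rewrite leq_mul2l succ_pow orbT //.
have : N.+1 * (3 * N ^ N) <= N.+1 * (3 * (3 ^ N * N`!)) by rewrite !leq_mul2l IH !orbT.
move/leq_trans; apply; rewrite expnS; lia.
Qed.

Lemma LBall N : N ^ N <= 3 ^ N * 4 ^ nth_prime N.
Proof.
apply: leq_trans (fact_pow N) _; rewrite leq_mul2l; apply/orP; right.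
exact: leq_trans (fact_le_prim N) (prim_le _).
Qed.

Lemma q_succ k : 0 < k -> q k.+1 = 2 * nth_prime (q k).
Proof. by case: k. Qed.

Lemma q_pos k : 0 < q k.
Proof. by case: k => // [[|k]] //=; rewrite muln_gt0 /=; apply: leq_ltn_trans (nth_prime_ge _). Qed.

Lemma q_le_succ k : q k <= q k.+1.
Proof.
case: k => // k; rewrite (q_succ (k := k.+1)) //.
have := nth_prime_ge (q k.+1); lia.
Qed.

Lemma q_mono k1 k2 : k1 <= k2 -> q k1 <= q k2.
Proof.
move=> /subnK <-; elim: (k2 - k1) => // d IH.
by rewrite addSn; apply: leq_trans IH (q_le_succ _).
Qed.

Lemma LBstep k t : 0 < k -> 3 * 2 ^ t <= q k -> t * q k <= q k.+1.
Proof.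
move=> k0 H; rewrite q_succ //; set N := q k.
have N0 : 0 < N := q_pos k.
rewrite leqNgt; apply/negP => Hlt.
have H1 := LBall N.
have H2 : 4 ^ nth_prime N < 2 ^ (t * N).
  by rewrite (_ : 4 = 2 ^ 2) // -expnM ltn_exp2l // mulnC.
have H3 : (3 * 2 ^ t) ^ N <= N ^ N by rewrite leq_exp2r.
rewrite expnMn -expnM in H3.
have : 3 ^ N * 4 ^ nth_prime N < 3 ^ N * 2 ^ (t * N) by rewrite ltn_mul2l expn_gt0 /=.
move: H1 H3; rewrite -/N; lia.
Qed.

Definition Mrel j m := q j.+1 * q m <= q m.+1 * q j.

Lemma PL j m : 0 < j -> 0 < m ->
  3 ^ q j * 4 ^ nth_prime (q j) <= q m ^ q j -> Mrel j m.
Proof.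
move=> j0 m0 H; rewrite /Mrel !q_succ //.
set n := q j; set N := q m; set x := nth_prime n; set y := nth_prime N.
rewrite -/n -/N -/x in H.
suff : x * N <= y * n by move=> H'; rewrite -!mulnA leq_mul2l H' orbT.
rewrite leqNgt; apply/negP => Hlt.
have N0 : 0 < N := q_pos m.
have n0 : 0 < n := q_pos j.
have H1 := LBall N; rewrite -/y in H1.
have H2 : (N ^ N) ^ n <= (3 ^ N * 4 ^ y) ^ n by rewrite leq_exp2r.
have H3 : (3 ^ n * 4 ^ x) ^ N <= (N ^ n) ^ N by rewrite leq_exp2r.
rewrite -!expnM expnMn -!expnM in H2 H3.
have H4 : 4 ^ (y * n) < 4 ^ (x * N) by rewrite ltn_exp2l.
have H5 : 3 ^ (N * n) * 4 ^ (y * n) < 3 ^ (N * n) * 4 ^ (x * N) by rewrite ltn_mul2l expn_gt0.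
rewrite [n * N]mulnC [N * n]mulnC in H2 H3 H5.
rewrite expnMn -!expnM in H3.
lia.
Qed.

Lemma UBq j : 0 < j -> 1 < q j -> q j.+1 <= 2 * trunc_log 2 (q j.+1) * q j.
Proof.
move=> j0 qj; rewrite q_succ //.
set x := nth_prime (q j).
have x0 : 0 < x by apply: leq_ltn_trans (nth_prime_ge _).
have H := UB0 qj; rewrite -/x in H.
rewrite mul2n trunc_log2_double // -mul2n -mulnA leq_mul2l /=.
exact: H.
Qed.

Lemma UBchain j U e : 0 < j -> 1 < q j -> q j <= U -> (e + 2) * U < 2 ^ e.+1 ->
  q j.+1 <= 2 * (e.+1 * U).
Proof.
move=> j0 qj qU H; rewrite q_succ // leq_mul2l /=.
exact: UB1 qj qU H.
Qed.

Definition pl := [seq p <- iota 0 444 | prime p].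
Definition gapok i := let a := nth 0 pl i in let b := nth 0 pl i.+1 in
  [&& a < b, prime b & all (fun k => ~~ prime k) (iota a.+1 (b - a.+1))].
Lemma gaps_ok : all gapok (iota 0 85). Proof. by vm_compute. Qed.

Lemma nth_prime_pl i : i < 86 -> nth_prime i.+1 = nth 0 pl i.
Proof.
elim: i => [|i IH] Hi; first by rewrite nth_prime1; vm_compute.
have G : gapok i by move/allP: gaps_ok; apply; rewrite mem_iota; lia.
case/and3P: G => G1 G2 /allP G3.
rewrite nth_prime_S IH; last by lia.
apply: next_prime_eq => // k /andP[k1 k2]; apply: G3; rewrite mem_iota; lia.
Qed.

Lemma q2 : q 2 = 4. Proof. by rewrite (q_succ (k := 1)) // [q 1]/= nth_prime1. Qed.
Lemma q3 : q 3 = 14. Proof. by rewrite q_succ // q2 (nth_prime_pl (i := 3)). Qed.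
Lemma q4 : q 4 = 86. Proof. by rewrite q_succ // q3 (nth_prime_pl (i := 13)). Qed.
Lemma q5 : q 5 = 886. Proof. by rewrite q_succ // q4 (nth_prime_pl (i := 85)). Qed.

From Stdlib Require Import NArith.

Definition K0 := 23.
Definition ttN (x : N) : N := N.log2 (N.div x 3).
Fixpoint Lc (k : nat) : N :=
  match k with
  | 0 | 1 => 1%N | 2 => 4%N | 3 => 14%N | 4 => 86%N | 5 => 886%N
  | S k' => let l := Lc k' in N.mul (ttN l) l
  end.
Fixpoint findE (fuel : nat) (e U : N) : N :=
  match fuel with
  | 0 => e
  | S f => if N.ltb (N.mul (e + 2) U) (N.pow 2 (e + 1)) then e else findE f (N.succ e) U
  end.
Definition EU (U : N) := findE 2000 0 U.
Fixpoint Uc (k : nat) : N :=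
  match k with
  | 0 | 1 => 1%N | 2 => 4%N | 3 => 14%N | 4 => 86%N | 5 => 886%N
  | S k' => let u := Uc k' in N.mul (N.mul 2 (EU u + 1)) u
  end.
Fixpoint prodN (a s : nat) : N :=
  match s with 0 => 1%N | S s' => N.mul (prodN a s') (ttN (Lc (a + s'))) end.

Definition ck1 := all (fun k => N.leb (N.mul 3 (N.pow 2 (ttN (Lc k)))) (Lc k)) (iota 4 41).
Definition ck2 := all (fun k => let u := Uc k in let e := EU u in N.ltb (N.mul (e + 2) u) (N.pow 2 (e + 1))) (iota 5 (K0 - 5)).
Definition ck3 := all (fun a => N.leb (Uc a) (N.mul 4 (prodN a (a - 2)))) (iota 4 (K0 - 3)).
Definition e0 := N.log2 (Lc K0.+1).
Definition ck4 := [&& N.leb 6 e0, N.leb (N.mul 3 (Uc K0)) (N.pow (e0 - 2) (N.of_nat (K0 - 3)))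
   & N.leb (N.pow 2 e0) (Lc K0.+1)].

Lemma ck1_ok : ck1. Proof. by vm_compute. Qed.
Lemma ck2_ok : ck2. Proof. by vm_compute. Qed.
Lemma ck3_ok : ck3. Proof. by vm_compute. Qed.
Lemma ck4_ok : ck4. Proof. by vm_compute. Qed.

From Stdlib Require Import NArith Lia.

Lemma toN_le a b : (a <= b)%N -> N.to_nat a <= N.to_nat b.
Proof. move=> H; apply/leP; lia. Qed.
Lemma toN_lt a b : (a < b)%N -> N.to_nat a < N.to_nat b.
Proof. move=> H; apply/ltP; lia. Qed.
Lemma powE a b : Nat.pow a b = a ^ b.
Proof. elim: b => // b IH; by rewrite expnS /= IH multE. Qed.
Lemma toN_mul a b : N.to_nat (a * b) = N.to_nat a * N.to_nat b.
Proof. by rewrite N2Nat.inj_mul multE. Qed.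
Lemma toN_pow a b : N.to_nat (a ^ b) = N.to_nat a ^ N.to_nat b.
Proof. by rewrite N2Nat.inj_pow powE. Qed.
Lemma toN_add a b : N.to_nat (a + b) = N.to_nat a + N.to_nat b.
Proof. by rewrite N2Nat.inj_add plusE. Qed.
Lemma toN_sub a b : N.to_nat (a - b) = N.to_nat a - N.to_nat b.
Proof. by rewrite N2Nat.inj_sub minusE. Qed.

Lemma Lc_S k : 5 <= k -> Lc k.+1 = N.mul (ttN (Lc k)) (Lc k).
Proof. by case: k => [|[|[|[|[|k]]]]]. Qed.
Lemma Uc_S k : 5 <= k -> Uc k.+1 = N.mul (N.mul 2 (EU (Uc k) + 1)) (Uc k).
Proof. by case: k => [|[|[|[|[|k]]]]]. Qed.

Definition tn k := N.to_nat (ttN (Lc k)).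
Definition ln k := N.to_nat (Lc k).
Definition un k := N.to_nat (Uc k).
Definition en k := N.to_nat (EU (Uc k)).
Fixpoint pn a s := match s with 0 => 1 | s'.+1 => pn a s' * tn (a + s') end.

Lemma pnE a s : N.to_nat (prodN a s) = pn a s.
Proof. elim: s => //= s IH; by rewrite toN_mul IH. Qed.

Lemma ck1n k : 4 <= k <= 44 -> 3 * 2 ^ tn k <= ln k.
Proof.
move=> Hk; move/allP: ck1_ok => /(_ k); rewrite mem_iota.
move=> /(_ ltac:(lia)) /N.leb_le /toN_le H.
by rewrite toN_mul toN_pow in H.
Qed.

Lemma ck2n k : 5 <= k < K0 -> (en k + 2) * un k < 2 ^ (en k).+1.
Proof.
move=> Hk; move/allP: ck2_ok => /(_ k); rewrite mem_iota.
move=> /(_ ltac:(rewrite /K0 in Hk *; lia)) /N.ltb_lt /toN_lt H.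
by rewrite toN_mul toN_pow !toN_add addn1 in H.
Qed.

Lemma ck3n a : 4 <= a <= K0 -> un a <= 4 * pn a (a - 2).
Proof.
move=> Ha; move/allP: ck3_ok => /(_ a); rewrite mem_iota.
move=> /(_ ltac:(rewrite /K0 in Ha *; lia)) /N.leb_le /toN_le H.
by rewrite toN_mul pnE in H.
Qed.

Definition e0n := N.to_nat e0.

Lemma ck4_gen (E L U : N) (K : nat) :
  [&& N.leb 6 E, N.leb (N.mul 3 U) (N.pow (E - 2) (N.of_nat K)) & N.leb (N.pow 2 E) L] ->
  [/\ 6 <= N.to_nat E, 3 * N.to_nat U <= (N.to_nat E - 2) ^ K & 2 ^ N.to_nat E <= N.to_nat L].
Proof.
case/and3P => /N.leb_le /toN_le H1 /N.leb_le /toN_le H2 /N.leb_le /toN_le H3.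
rewrite toN_mul toN_pow toN_sub Nat2N.id in H2.
rewrite toN_pow in H3.
by split.
Qed.

Lemma ck4n : [/\ 6 <= e0n, 3 * un K0 <= (e0n - 2) ^ (K0 - 3) & 2 ^ e0n <= ln K0.+1].
Proof. exact: (ck4_gen ck4_ok). Qed.

Lemma Lq_aux d : d <= 40 -> ln (4 + d) <= q (4 + d).
Proof.
elim: d => [|d IH] Hd; first by rewrite addn0 q4.
case: d IH Hd => [|d] IH Hd; first by rewrite q5.
have Hk : 5 <= 4 + d.+1 by lia.
rewrite addnS /ln Lc_S // toN_mul -/(ln _) -/(tn _).
apply: leq_trans (LBstep (k := 4 + d.+1) _ _); last first.
  - apply: leq_trans (ck1n _) (IH _); lia.
  - lia.
rewrite leq_mul2l; apply/orP; right; apply: IH; lia.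
Qed.

Lemma Lq k : 4 <= k <= 44 -> ln k <= q k.
Proof.
move=> Hk; have -> : k = 4 + (k - 4) by lia.
apply: Lq_aux; lia.
Qed.

Lemma q_ge5 k : 5 <= k -> 886 <= q k.
Proof. by move=> Hk; rewrite -q5; apply: q_mono. Qed.

Lemma Uq_aux d : 5 + d <= K0 -> q (5 + d) <= un (5 + d).
Proof.
elim: d => [|d IH] Hd; first by rewrite addn0 q5.
have Hk : 5 <= 5 + d by lia.
rewrite addnS /un Uc_S // !toN_mul toN_add -/(un _) -/(en _).
have H := ck2n (k := 5 + d) ltac:(rewrite /K0 in Hd *; lia).
have := UBchain (j := 5 + d) _ _ (IH ltac:(lia)) H.
rewrite addn1 mulnA; apply; first lia.
have := q_ge5 Hk; lia.
Qed.

Lemma Uq k : 5 <= k <= K0 -> q k <= un k.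
Proof.
move=> Hk; have -> : k = 5 + (k - 5) by lia.
apply: Uq_aux; lia.
Qed.

Lemma chain_abs a b s : 4 <= a -> a <= b -> a + s <= 45 -> q b * pn a s <= q (b + s).
Proof.
move=> a4 ab; elim: s => [|s IH] Hs; first by rewrite muln1 addn0.
rewrite /= addnS mulnA.
have H1 : 3 * 2 ^ tn (a + s) <= q (b + s).
  apply: leq_trans (ck1n _) _; first lia.
  apply: leq_trans (Lq _) (q_mono _); lia.
have := LBstep (k := b + s) ltac:(lia) H1.
apply: leq_trans; rewrite mulnC leq_mul2l; apply/orP; right; apply: IH; lia.
Qed.

Lemma G_abs a b : 4 <= a <= K0 -> a <= b -> q a * q b <= 4 * q (a + b - 2).
Proof.
move=> Ha ab.
have H1 := ck3n Ha.
have H2 : q a <= un a.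
  case: (ltnP 4 a) => a4; first by apply: Uq; rewrite /K0 in Ha *; lia.
  have -> : a = 4 by lia.
  by rewrite q4.
have H3 := chain_abs (a := a) (b := b) (s := a - 2) ltac:(lia) ab ltac:(rewrite /K0 in Ha *; lia).
have -> : a + b - 2 = b + (a - 2) by lia.
apply: leq_trans (_ : 4 * pn a (a - 2) * q b <= _).
  by rewrite leq_mul2r (leq_trans H2 H1) orbT.
by rewrite -mulnA leq_mul2l mulnC H3 orbT.
Qed.

Lemma G3 b : 3 <= b -> q 3 * q b <= 4 * q (3 + b - 2).
Proof.
move=> b3; rewrite q3.
case: (leqP b 3) => Hb.
  have -> : b = 3 by lia.
  have -> : 3 + 3 - 2 = 4 by [].
  by rewrite q3 q4.
have -> : 3 + b - 2 = b.+1 by lia.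
have H : 3 * 2 ^ 4 <= q b.
  apply: (@leq_trans 86) => //; rewrite -q4; apply: q_mono; lia.
have := LBstep (k := b) ltac:(lia) H; lia.
Qed.

Lemma pow43 n : 5 <= n -> 4 * 3 ^ n <= 4 ^ n.
Proof.
elim: n => // n IH Hn.
case: (ltnP 5 n.+1) => H; last by have -> : n.+1 = 5 by lia.
rewrite !expnS; have := IH ltac:(lia); lia.
Qed.

Lemma K0_val : K0 = 23. Proof. by []. Qed.

Lemma Mrel_big j : K0 <= j -> forall m, (j.*2).-1 <= m -> Mrel j m.
Proof.
elim/ltn_ind: j => j IHj Hj m Hm.
have j0 : 0 < j by move: Hj; rewrite K0_val; lia.
have qK0 : 0 < q K0 := q_pos K0.
have Tele : forall d, K0 + d <= j ->
    q (K0 + d) * q (K0 + j - 1) <= q (K0 + d + j - 1) * q K0.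
  elim=> [|d IH] Hd; first by rewrite addn0 mulnC.
  set i := K0 + d.
  have Hi : i < j by rewrite /i; lia.
  have Mi : Mrel i (i + j - 1).
    apply: IHj; rewrite /i; lia.
  rewrite /Mrel in Mi.
  have E1 : i + j - 1 = (i + j).-1 by lia.
  have E2 : K0 + d.+1 = i.+1 by rewrite /i; lia.
  have E3 : i.+1 + j - 1 = i + j by lia.
  rewrite E2 E3 -(leq_pmul2l (q_pos i)).
  have IH' := IH ltac:(lia); rewrite -/i in IH'.
  rewrite mulnCA; apply: leq_trans (_ : q i.+1 * (q (i + j - 1) * q K0) <= _).
    by rewrite leq_mul2l IH' orbT.
  rewrite mulnA; apply: leq_trans (_ : q (i + j) * q i * q K0 <= _).
    by rewrite leq_mul2r Mi orbT.
  by rewrite [q (i + j) * _]mulnC -mulnA.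
have Tj := Tele (j - K0) ltac:(lia).
have E4 : K0 + (j - K0) = j by lia.
rewrite E4 in Tj.
have E5 : j + j - 1 = (j.*2).-1 by lia.
rewrite E5 in Tj.
have [U [L [E0 [c1 c2 c3 UK LK]]]] : exists U L E0,
   [/\ 6 <= E0, 3 * U <= (E0 - 2) ^ (K0 - 3), 2 ^ E0 <= L, q K0 <= U & L <= q K0.+1].
  have UK := Uq (k := K0) (isT : 5 <= K0 <= K0).
  have LK := Lq (k := K0.+1) (isT : 4 <= K0.+1 <= 44).
  case: ck4n => c1 c2 c3; exists (un K0), (ln K0.+1), e0n; split.
  - exact: c1.
  - exact: c2.
  - exact: c3.
  - exact: UK.
  - exact: LK.
have qj1 : L <= q j.+1 by apply: leq_trans LK (q_mono _).
set e := trunc_log 2 (q j.+1).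
have He : E0 <= e := trunc_log_max (isT : 1 < 2) (leq_trans c3 qj1).
have H2e : 2 ^ e <= q j.+1 := trunc_logP (isT : 1 < 2) (q_pos _).
set T := e - 2.
have HT : 3 * 2 ^ T <= q j.+1.
  apply: leq_trans H2e; have -> : e = 2 + T by rewrite /T; lia.
  by rewrite expnD leq_mul2r orbT.
have chainT : forall s, q j.+1 * T ^ s <= q (j.+1 + s).
  elim=> [|s IH]; first by rewrite muln1 addn0.
  rewrite expnS addnS mulnCA.
  have := LBstep (k := j.+1 + s) ltac:(lia) (leq_trans HT (q_mono _)).
  move=> /(_ ltac:(lia)); apply: leq_trans; rewrite leq_mul2l IH orbT //.
have CT := chainT (K0 - 2).
have E6 : j.+1 + (K0 - 2) = K0 + j - 1 by rewrite K0_val; lia.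
rewrite E6 in CT.
have qj2 : 1 < q j by apply: leq_trans (q_ge5 _); rewrite K0_val in Hj; lia.
have UB := UBq j0 qj2; rewrite -/e in UB.
have TT : (E0 - 2) ^ (K0 - 3) <= T ^ (K0 - 3).
  by rewrite leq_exp2r ?K0_val //; rewrite /T; lia.
have Key : q K0 * q j.+1 <= q j * T ^ (K0 - 2).
  have -> : K0 - 2 = (K0 - 3).+1 by rewrite K0_val.
  rewrite expnS.
  have A1 : q K0 * q j.+1 <= U * (2 * e * q j) by apply: leq_mul.
  have A2 : 2 * e <= 3 * T by rewrite /T; lia.
  have A3 : 3 * U <= T ^ (K0 - 3) := leq_trans c2 TT.
  apply: leq_trans A1 _.
  rewrite mulnA mulnC leq_mul2l; apply/orP; right.
  apply: leq_trans (_ : U * (3 * T) <= _); first by rewrite leq_mul2l A2 orbT.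
  have EE : U * (3 * T) = T * (3 * U) by lia.
  by rewrite EE leq_mul2l A3 orbT.
have Sq : q j.+1 * q j.+1 <= q (j.*2).-1.
  rewrite -(leq_pmul2r qK0).
  apply: leq_trans Tj.
  apply: leq_trans (_ : q j * (q j.+1 * T ^ (K0 - 2)) <= _); last by rewrite leq_mul2l CT orbT.
  rewrite mulnCA -mulnA leq_mul2l; apply/orP; right.
  by rewrite mulnC.
apply: PL => //; first by lia.
set n := q j; set x := nth_prime n.
have n5 : 5 <= n by apply: leq_trans (q_ge5 _); rewrite K0_val in Hj; lia.
have Ex : q j.+1 = 2 * x by rewrite q_succ.
have HCU := CU (n := n) ltac:(lia); rewrite -/x in HCU.
have x1 : 0 < x by apply: leq_ltn_trans (nth_prime_ge _).
have Hqm : (2 * x) * (2 * x) <= q m by rewrite -Ex; apply: leq_trans Sq (q_mono Hm).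
have E7 : 4 ^ x = 4 * (2 ^ x.-1) ^ 2.
  have -> : 4 ^ x = 2 ^ (2 * x) by rewrite expnM.
  rewrite -expnM (_ : 4 = 2 ^ 2) // -expnD; congr (_ ^ _); lia.
rewrite E7.
have Sa : (2 ^ x.-1) ^ 2 <= (x ^ n) ^ 2 by rewrite leq_exp2r.
have Sd : (4 * x * x) ^ n <= q m ^ n by rewrite leq_exp2r //; move: Hqm; lia.
have Eb : (4 * x * x) ^ n = 4 ^ n * (x ^ n) ^ 2 by rewrite !expnMn -mulnA mulnn.
have Sc := pow43 n5.
apply: leq_trans Sd; rewrite Eb.
apply: leq_trans (_ : 3 ^ n * (4 * (x ^ n) ^ 2) <= _).
  by rewrite leq_mul2l leq_mul2l Sa !orbT.
by rewrite mulnCA mulnA leq_mul2r Sc orbT.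
Qed.

Lemma G_all a b : 2 <= a <= b -> q a * q b <= 4 * q (a + b - 2).
Proof.
elim/ltn_ind: a b => a IH b /andP[a2 ab].
case: (leqP a 2) => Ha2.
  have -> : a = 2 by lia.
  by rewrite q2 (_ : 2 + b - 2 = b) //; lia.
case: (leqP a 3) => Ha3.
  have -> : a = 3 by lia.
  apply: G3; lia.
case: (leqP a K0) => HaK.
  by apply: G_abs => //; rewrite HaK andbT.
have H1 := IH a.-1 ltac:(lia) b ltac:(lia).
have M := Mrel_big (j := a.-1) ltac:(lia) (m := a.-1 + b - 2) ltac:(lia).
rewrite /Mrel in M.
have E1 : (a.-1).+1 = a by lia.
have E2 : (a.-1 + b - 2).+1 = a + b - 2 by lia.
have E3 : a.-1 + b - 2 = a.-1 + b - 2 by [].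
rewrite E1 E2 in M.
rewrite -(leq_pmul2l (q_pos a.-1)).
rewrite mulnA [q a.-1 * q a]mulnC -mulnA.
apply: leq_trans (_ : q a * (4 * q (a.-1 + b - 2)) <= _).
  by rewrite leq_mul2l H1 orbT.
rewrite mulnCA [q a.-1 * _]mulnCA leq_mul2l /=.
by rewrite [q a.-1 * _]mulnC.
Qed.

Theorem mainTheorem2 (k1 k2 : nat) :
  0 < k1 -> 0 < k2 ->
  nth_prime (q k1) * nth_prime (q k2) <= q (k1 + k2).
Proof.
wlog H : k1 k2 / k1 <= k2.
  move=> W h1 h2; case: (leqP k1 k2) => Hk; first exact: W.
  rewrite mulnC addnC; apply: W => //; exact: ltnW.
move=> h1 h2.
have := G_all (a := k1.+1) (b := k2.+1) ltac:(lia).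
rewrite !q_succ // (_ : k1.+1 + k2.+1 - 2 = k1 + k2); last by lia.
by rewrite mulnACA leq_pmul2l.
Qed.
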